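(* Let $A=\{A_i\}_{i=1}^\mathsf{p}\subset\mathcal{B}(\mathbb{C}^D)$ be the tensor of an injective MPS in canonical form, with transfer matrix $E=\sum_i\overline{A_i}\otimes A_i=|I\rangle\rangle\langle\langle\Lambda|+\tilde E$. Let $X,Y\in \mathcal{B}(\mathbb{C}^D)$ be such that the states $|\Psi_X\rangle=|\Psi(A,X,n)\rangle$ and $|\Psi_Y\rangle=|\Psi(A,Y,n)\rangle$ are normalized and orthogonal, and assume $n$ is sufficiently large compared to $D$. Then (i) $\|X\|_F=O(1)$ (and likewise $\|Y\|_F=O(1)$); (ii) $|\langle\langle\Lambda|(\overline{X}\otimes Y)|I\rangle\rangle|= O(\lambda_2^{n/2})$ and $|\langle\langle\Lambda|(\overline{Y}\otimes X)|I\rangle\rangle|= O(\lambda_2^{n/2})$, where the $O$-notation refers to $n\to\infty$.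
   Context: MPS: $|\Psi(A,X,n)\rangle=\sum_{i_1,\dots,i_n}\mathrm{tr}(A_{i_1}\cdots A_{i_n}X)|i_1\cdots i_n\rangle$. Vectorization: for $X=\sum_{\alpha,\beta}X_{\alpha\beta}|\alpha\rangle\langle\beta|$ set $|X\rangle\rangle=\sum_{\alpha,\beta}X_{\alpha\beta}|\beta\rangle\otimes|\alpha\rangle\in\mathbb{C}^D\otimes\mathbb{C}^D$, so $E|X\rangle\rangle=|\mathcal{E}(X)\rangle\rangle$ with $\mathcal{E}(X)=\sum_iA_iXA_i^\dagger$. Injective: $\mathcal{E}$ has spectral radius $1$ and is primitive (its fixed point is positive definite and $1$ is its only eigenvalue on the unit circle, with multiplicity one). Canonical form: the unique fixed point of $\mathcal{E}$ is the identity $I$, and the unique fixed point of $\mathcal{E}^\dagger(Y)=\sum_iA_i^\dagger YA_i$ is a positive definite diagonal matrix $\Lambda$ with $\mathrm{tr}\Lambda=1$; then $E=|I\rangle\rangle\langle\langle\Lambda|\oplus\tilde E$ is the Jordan decomposition, with $\tilde E$ collecting the Jordan blocks of eigenvalues of modulus $<1$. $\lambda_2<1$ denotes the largest modulus of an eigenvalue of $E$ other than the eigenvalue $1$. *)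

(* Defs.v *)
From HB Require Import structures.
From mathcomp Require Import all_boot all_order all_algebra all_field.
Set Implicit Arguments. Unset Strict Implicit. Unset Printing Implicit Defensive.
Import Order.TTheory GRing.Theory Num.Theory.
Local Open Scope ring_scope.

Section MPS.
Variables (p D : nat).

(* Index (k : 'I_(D*D)) of C^D ⊗ C^D decoded as a pair (first factor, second factor);
   the basis vector |b> ⊗ |a> has index mxvec_index b a. *)
Definition idx2 (k : 'I_(D * D)) : 'I_D * 'I_D :=
  enum_val (cast_ord (esym (mxvec_cast D D)) k).

Definition kron (M N : 'M[algC]_D) : 'M[algC]_(D * D) :=
  \matrix_(k, l) (M (idx2 k).1 (idx2 l).1 * N (idx2 k).2 (idx2 l).2).

Definition conjm m n (M : 'M[algC]_(m, n)) : 'M[algC]_(m, n) := map_mx Num.conj M.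
Definition adjm m n (M : 'M[algC]_(m, n)) : 'M[algC]_(n, m) := (conjm M)^T.

(* Vectorization |X>> = sum_{a,b} X_{ab} |b> ⊗ |a>. *)
Definition vecm (X : 'M[algC]_D) : 'cV[algC]_(D * D) :=
  \col_k X (idx2 k).2 (idx2 k).1.

Definition braket (u v : 'cV[algC]_(D * D)) : algC :=
  \sum_k (u k 0)^* * v k 0.

Definition transfer (A : 'I_p -> 'M[algC]_D) : 'M[algC]_(D * D) :=
  \sum_i kron (conjm (A i)) (A i).

Definition channel (A : 'I_p -> 'M[algC]_D) (X : 'M[algC]_D) : 'M[algC]_D :=
  \sum_i (A i *m X *m adjm (A i)).
Definition channel_adj (A : 'I_p -> 'M[algC]_D) (Y : 'M[algC]_D) : 'M[algC]_D :=
  \sum_i (adjm (A i) *m Y *m A i).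

(* Coefficient tr(A_{s 0} ... A_{s (n-1)} X) of |Psi(A,X,n)> on |s 0 ... s (n-1)>. *)
Definition mps_coef (A : 'I_p -> 'M[algC]_D) (X : 'M[algC]_D) (n : nat)
    (s : {ffun 'I_n -> 'I_p}) : algC :=
  \tr (foldr (fun k M => A (s k) *m M) X (enum 'I_n)).

Definition mps_inner (A : 'I_p -> 'M[algC]_D) (X Y : 'M[algC]_D) (n : nat) : algC :=
  \sum_(s : {ffun 'I_n -> 'I_p}) (mps_coef A X s)^* * mps_coef A Y s.

Definition frob (X : 'M[algC]_D) : algC :=
  sqrtC (\sum_i \sum_j `|X i j| ^+ 2).

(* Injective MPS (spectral radius 1, primitive) in canonical form with
   left fixed point Lam. *)
Definition injective_canonical (A : 'I_p -> 'M[algC]_D) (Lam : 'M[algC]_D) : Prop :=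
  let E := transfer A in
  [/\
      eigenvalue E 1 /\ (forall mu, eigenvalue E mu -> `|mu| <= 1),
      (forall mu, eigenvalue E mu -> `|mu| = 1 -> mu = 1) /\ mup 1 (char_poly E) = 1%N,
      channel A 1%:M = 1%:M /\ (forall X, channel A X = X -> exists c, X = c%:M),
      channel_adj A Lam = Lam /\ (forall Y, channel_adj A Y = Y -> exists c, Y = c *: Lam)
    &
      [/\ is_diag_mx Lam, forall i, 0 < Lam i i & \tr Lam = 1]].

Definition is_lambda2 (A : 'I_p -> 'M[algC]_D) (lam2 : algC) : Prop :=
  (exists2 mu, eigenvalue (transfer A) mu & mu != 1 /\ `|mu| = lam2) /\
  (forall mu, eigenvalue (transfer A) mu -> mu != 1 -> `|mu| <= lam2).

End MPS.

(* Main.v *)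
Require Import Defs.
From HB Require Import structures.
From mathcomp Require Import all_boot all_order all_algebra all_field.
From mathcomp Require Import ring zify.
Import Order.TTheory GRing.Theory Num.Theory.
Local Open Scope ring_scope.
Set Implicit Arguments. Unset Strict Implicit. Unset Printing Implicit Defensive.

Section Basic.
Variable D : nat.
Implicit Types (X Y M N : 'M[algC]_D).

Lemma idx2_mxvec (i j : 'I_D) : idx2 (mxvec_index i j) = (i, j).
Proof. by rewrite /idx2 /mxvec_index cast_ordK enum_rankK. Qed.

Lemma mxvec_index_inj (a b c d : 'I_D) :
  (mxvec_index a b == mxvec_index c d) = (a == c) && (b == d).
Proof.
apply/eqP/andP => [H|[/eqP -> /eqP ->]] //.
by have := idx2_mxvec a b; rewrite H idx2_mxvec => -[-> ->].
Qed.

Lemma sum_mxvec (V : nmodType) (F : 'I_(D * D) -> V) :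
  \sum_k F k = \sum_i \sum_j F (mxvec_index i j).
Proof.
rewrite (reindex (fun p : 'I_D * 'I_D => mxvec_index p.1 p.2)) /=.
  by rewrite pair_big /=.
exists (@idx2 D) => [[i j] _ | k _] /=; first by rewrite idx2_mxvec.
by case/mxvec_indexP: k => i j; rewrite idx2_mxvec.
Qed.

Lemma kronE M N a b c d :
  kron M N (mxvec_index a b) (mxvec_index c d) = M a c * N b d.
Proof. by rewrite /kron mxE !idx2_mxvec. Qed.

Lemma vecmE X a b : vecm X (mxvec_index a b) 0 = X b a.
Proof. by rewrite /vecm mxE idx2_mxvec. Qed.

Lemma kronM M N M' N' : kron M N *m kron M' N' = kron (M *m M') (N *m N').
Proof.
apply/matrixP => k l; case/mxvec_indexP: k => a b; case/mxvec_indexP: l => c d.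
rewrite kronE !mxE sum_mxvec big_distrlr /=.
apply: eq_bigr => i _; apply: eq_bigr => j _.
by rewrite !kronE mulrACA.
Qed.

Lemma kron1 : kron (1%:M : 'M_D) 1%:M = 1%:M.
Proof.
apply/matrixP => k l; case/mxvec_indexP: k => a b; case/mxvec_indexP: l => c d.
by rewrite kronE !mxE mxvec_index_inj; case: (a == c); case: (b == d); rewrite ?mulr0 ?mulr1.
Qed.

Lemma tr_kron M N : \tr (kron M N) = \tr M * \tr N.
Proof.
rewrite /mxtrace sum_mxvec big_distrlr /=.
by apply: eq_bigr => i _; apply: eq_bigr => j _; rewrite kronE.
Qed.

Lemma kron_vec M N Z : kron M N *m vecm Z = vecm (N *m Z *m M^T).
Proof.
apply/matrixP => k l; rewrite (ord1 l); case/mxvec_indexP: k => a b.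
rewrite vecmE !mxE sum_mxvec /=.
apply: eq_bigr => i _; rewrite !mxE big_distrl /=; apply: eq_bigr => j _.
rewrite kronE vecmE; ring.
Qed.

Lemma conjmM M N : conjm (M *m N) = conjm M *m conjm N.
Proof. by rewrite /conjm map_mxM. Qed.

Lemma conjm1 : conjm (1%:M : 'M_D) = 1%:M.
Proof. by rewrite /conjm map_mx1. Qed.

Lemma conjmK M : conjm (conjm M) = M.
Proof. by apply/matrixP => i j; rewrite !mxE conjCK. Qed.

End Basic.

Lemma enum_bigE (R : Type) (idx : R) (op : R -> R -> R) n (F : 'I_n -> R) :
  \big[op/idx]_(k <- enum 'I_n) F k = \big[op/idx]_(k < n) F k.
Proof. by rewrite enumT unlock. Qed.

Section Transfer.
Variables (p D : nat).
Implicit Types (X Y M N Z : 'M[algC]_D).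
Variable A : 'I_p -> 'M[algC]_D.

Lemma vecm_sum (I : Type) (r : seq I) (P : pred I) (F : I -> 'M[algC]_D) :
  vecm (\sum_(i <- r | P i) F i) = \sum_(i <- r | P i) vecm (F i).
Proof. by apply/matrixP => k l; rewrite !mxE !summxE; apply: eq_bigr => i _; rewrite mxE. Qed.

Lemma vecmZ c X : vecm (c *: X) = c *: vecm X.
Proof. by apply/matrixP => k l; rewrite !mxE. Qed.

Lemma adjm_sum m n (I : Type) (r : seq I) (P : pred I) (F : I -> 'M[algC]_(m, n)) :
  adjm (\sum_(i <- r | P i) F i) = \sum_(i <- r | P i) adjm (F i).
Proof.
apply/matrixP => k l; rewrite !mxE !summxE rmorph_sum; apply: eq_bigr => i _.
by rewrite !mxE.
Qed.

Lemma adjmZ m n c (U : 'M[algC]_(m, n)) : adjm (c *: U) = c^* *: adjm U.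
Proof. by apply/matrixP => k l; rewrite !mxE rmorphM. Qed.

Lemma adjm_mul m n q (U : 'M[algC]_(m, n)) (V : 'M[algC]_(n, q)) :
  adjm (U *m V) = adjm V *m adjm U.
Proof. by rewrite /adjm /conjm map_mxM trmx_mul. Qed.

Lemma adjmK m n (U : 'M[algC]_(m, n)) : adjm (adjm U) = U.
Proof. by apply/matrixP => i j; rewrite !mxE conjCK. Qed.

Lemma adjm_kron M N : adjm (kron M N) = kron (adjm M) (adjm N).
Proof.
apply/matrixP => k l; case/mxvec_indexP: k => a b; case/mxvec_indexP: l => c d.
by rewrite /kron !mxE !idx2_mxvec /= rmorphM.
Qed.

Lemma transfer_vec X : transfer A *m vecm X = vecm (channel A X).
Proof.
rewrite /transfer mulmx_suml /channel vecm_sum; apply: eq_bigr => i _.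
by rewrite kron_vec.
Qed.

Lemma row_transfer Y : adjm (vecm Y) *m transfer A = adjm (vecm (channel_adj A Y)).
Proof.
rewrite -[adjm (vecm Y) *m _]adjmK adjm_mul adjmK /transfer adjm_sum mulmx_suml.
rewrite /channel_adj vecm_sum; congr adjm; apply: eq_bigr => i _.
rewrite adjm_kron kron_vec; congr vecm; congr (_ *m _).
by rewrite /adjm trmxK conjmK.
Qed.

Lemma prod_kron (I : Type) (r : seq I) (P : pred I) (a b : I -> 'M[algC]_D) :
  \prod_(i <- r | P i) kron (a i) (b i) =
  kron (\prod_(i <- r | P i) a i) (\prod_(i <- r | P i) b i).
Proof.
elim: r => [|x r IH]; first by rewrite !big_nil kron1.
by rewrite !big_cons; case: (P x) => //; rewrite IH -!mulmxE kronM.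
Qed.

Lemma prod_conjm (I : Type) (r : seq I) (P : pred I) (a : I -> 'M[algC]_D) :
  \prod_(i <- r | P i) conjm (a i) = conjm (\prod_(i <- r | P i) a i).
Proof.
elim: r => [|x r IH]; first by rewrite !big_nil conjm1.
by rewrite !big_cons; case: (P x) => //; rewrite IH -!mulmxE conjmM.
Qed.

Lemma foldr_prod X n (s : {ffun 'I_n -> 'I_p}) (l : seq 'I_n) :
  foldr (fun k M => A (s k) *m M) X l = (\prod_(k <- l) A (s k)) *m X.
Proof.
elim: l => [|k l IH] /=; first by rewrite big_nil mul1mx.
by rewrite IH big_cons -mulmxE mulmxA.
Qed.

Lemma transfer_pow n : transfer A ^+ n =
  \sum_(s : {ffun 'I_n -> 'I_p})
     kron (conjm (\prod_(k < n) A (s k))) (\prod_(k < n) A (s k)).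
Proof.
rewrite -[n in LHS]card_ord -prodr_const /transfer.
rewrite (bigA_distr_bigA (fun (i : 'I_n) (j : 'I_p) => kron (conjm (A j)) (A j))) /=.
by apply: eq_bigr => s _; rewrite prod_kron prod_conjm.
Qed.

Lemma tr_conjm M : \tr (conjm M) = (\tr M)^*.
Proof. by rewrite /mxtrace rmorph_sum; apply: eq_bigr => i _; rewrite mxE. Qed.

Lemma tr_sum m (I : Type) (r : seq I) (P : pred I) (F : I -> 'M[algC]_m) :
  \tr (\sum_(i <- r | P i) F i) = \sum_(i <- r | P i) \tr (F i).
Proof.
rewrite /mxtrace; under eq_bigr do rewrite summxE.
by rewrite exchange_big.
Qed.

Lemma inner_tr X Y n :
  mps_inner A X Y n = \tr (transfer A ^+ n *m kron (conjm X) Y).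
Proof.
rewrite transfer_pow mulmx_suml tr_sum /mps_inner; apply: eq_bigr => s _.
rewrite /mps_coef !foldr_prod !enum_bigE kronM tr_kron -conjmM tr_conjm.
by [].
Qed.

Lemma inner_sym X Y n : mps_inner A Y X n = (mps_inner A X Y n)^*.
Proof.
rewrite /mps_inner rmorph_sum; apply: eq_bigr => s _.
by rewrite rmorphM /= conjCK mulrC.
Qed.

End Transfer.

Section Brak.
Variable D : nat.
Implicit Types (X Y M N Z : 'M[algC]_D).

Lemma braket_vec Y Z : braket (vecm Y) (vecm Z) = \sum_a \sum_b (Y b a)^* * Z b a.
Proof.
rewrite /braket sum_mxvec; apply: eq_bigr => a _; apply: eq_bigr => b _.
by rewrite !vecmE.
Qed.

Lemma adjm_mul_braket (u v : 'cV[algC]_(D * D)) : adjm u *m v = (braket u v)%:M.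
Proof.
rewrite [LHS]mx11_scalar; congr _%:M; rewrite !mxE /braket.
by apply: eq_bigr => k _; rewrite !mxE.
Qed.

Lemma tr_rank1 (u v : 'cV[algC]_(D * D)) K :
  \tr (u *m adjm v *m K) = braket v (K *m u).
Proof.
rewrite /mxtrace /braket.
under eq_bigr => i _ do (rewrite mxE; under eq_bigr => j _ do rewrite mxE big_ord1 !mxE).
rewrite exchange_big /=; apply: eq_bigr => j _.
rewrite mxE big_distrr /=; apply: eq_bigr => i _; ring.
Qed.

End Brak.

Lemma ler_expn (x y : algC) n : 0 <= x -> x <= y -> x ^+ n <= y ^+ n.
Proof.
move=> x0 xy; elim: n => [|n IH]; first by rewrite !expr0.
rewrite !exprS; apply: ler_pM => //; exact: exprn_ge0.
Qed.

Section Trig.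
Variable d : nat.
Variable T : 'M[algC]_d.
Hypothesis Ttrig : is_trig_mx T.

Lemma trig_nil_aux : (forall i, T i i = 0) ->
  forall k (i j : 'I_d), (i < j + k)%N -> (T ^+ k) i j = 0.
Proof.
move=> T0; elim => [|k IH] i j lt_ijk.
  by rewrite expr0 mxE; case: eqP => // eij; move: lt_ijk; rewrite eij addn0 ltnn.
rewrite exprSr -mulmxE mxE big1 // => l _.
case: (ltngtP l j) => [lj|jl|/val_inj lj].
- by rewrite (is_trig_mxP Ttrig l j lj) mulr0.
- by rewrite IH ?mul0r //; lia.
- by rewrite lj T0 mulr0.
Qed.

Lemma trig_nil : (forall i, T i i = 0) -> T ^+ d = 0.
Proof.
move=> T0; apply/matrixP => i j; rewrite mxE trig_nil_aux //.
by have := ltn_ord i; lia.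
Qed.

Variables (r delta : algC).
Hypothesis r0 : 0 <= r.
Hypothesis Tdiag : forall i, `|T i i| <= r.
Hypothesis delta0 : 0 < delta.
Hypothesis delta1 : delta <= 1.

Definition Bsum := \sum_i \sum_j `|T i j|.
Definition rho := r + delta * Bsum.

Lemma Bsum_ge0 : 0 <= Bsum.
Proof. by apply: sumr_ge0 => i _; apply: sumr_ge0 => j _. Qed.

Lemma rho_ge0 : 0 <= rho.
Proof. by rewrite /rho addr_ge0 // mulr_ge0 ?Bsum_ge0 // ltW. Qed.

Lemma row_le_B i : \sum_j `|T i j| <= Bsum.
Proof.
rewrite /Bsum [X in _ <= X](bigD1 i) //= lerDl; apply: sumr_ge0 => k _.
by apply: sumr_ge0.
Qed.

Lemma row_weight i :
  \sum_l `|T i l| * delta ^+ (d - l) <= rho * delta ^+ (d - i).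
Proof.
have dge0 : 0 <= delta by apply: ltW.
have dpow m : 0 <= delta ^+ m by apply: exprn_ge0.
apply: (@le_trans _ _ (\sum_l ((l == i)%:R * (r * delta ^+ (d - i))
                       + delta ^+ (d - i) * delta * `|T i l|))).
  apply: ler_sum => l _.
  case: (ltngtP l i) => [li|il|/val_inj li].
  - rewrite (_ : l == i = false); last by apply/negbTE; rewrite neq_ltn li.
    rewrite mul0r add0r [X in _ <= X]mulrC; apply: ler_wpM2l => //.
    have -> : (d - l = (d - i) + (i - l).-1.+1)%N by have := ltn_ord i; lia.
    rewrite exprD exprS; apply: ler_wpM2l => //.
    rewrite -[X in _ <= X]mulr1; apply: ler_wpM2l => //.
    by apply: exprn_ile1.
  - by rewrite (is_trig_mxP Ttrig i l il) normr0 mul0r addr_ge0 ?mulr_ge0 //;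
       case: (l == i); rewrite ?mul1r ?mul0r.
  - rewrite li eqxx mul1r; apply: ler_wpDr; first by rewrite !mulr_ge0.
    by apply: ler_wpM2r.
rewrite big_split /= -mulr_suml -mulr_sumr.
rewrite [\sum_(l < d) (l == i)%:R](bigD1 i) //= eqxx big1 => [|l /negbTE -> //].
rewrite addr0 mul1r /rho mulrDl; apply: lerD => //.
rewrite [X in _ <= X]mulrC mulrA; apply: ler_wpM2l; first by rewrite mulr_ge0.
exact: row_le_B.
Qed.

Lemma trig_weighted n i :
  \sum_j `|(T ^+ n) i j| * delta ^+ (d - j) <= rho ^+ n * delta ^+ (d - i).
Proof.
have dge0 : 0 <= delta by apply: ltW.
elim: n i => [|n IH] i.
  rewrite !expr0 mul1r (bigD1 i) //= big1 => [|j /negbTE nji]; last first.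
    by rewrite mxE eq_sym nji normr0 mul0r.
  by rewrite mxE eqxx normr1 mul1r addr0.
rewrite exprS -mulmxE.
apply: (@le_trans _ _ (\sum_j \sum_l `|T i l| * (`|(T ^+ n) l j| * delta ^+ (d - j)))).
  apply: ler_sum => j _; rewrite mxE.
  under [X in _ <= X]eq_bigr do rewrite mulrA.
  rewrite -mulr_suml; apply: ler_wpM2r; first exact: exprn_ge0.
  apply: le_trans (ler_norm_sum _ _ _) _; apply: ler_sum => l _.
  by rewrite normrM.
rewrite exchange_big /=.
apply: (@le_trans _ _ (\sum_l `|T i l| * (rho ^+ n * delta ^+ (d - l)))).
  apply: ler_sum => l _; rewrite -mulr_sumr; apply: ler_wpM2l => //.
rewrite exprS -mulrA (mulrC (rho ^+ n)) mulrA.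
under eq_bigr do rewrite mulrCA.
rewrite -mulr_sumr mulrC; apply: ler_wpM2r; first by apply: exprn_ge0 rho_ge0.
exact: row_weight.
Qed.

Lemma trig_bound n i j : `|(T ^+ n) i j| <= rho ^+ n / delta ^+ d.
Proof.
have dge0 : 0 <= delta by apply: ltW.
rewrite ler_pdivlMr; last by apply: exprn_gt0.
apply: (@le_trans _ _ (`|(T ^+ n) i j| * delta ^+ (d - j))).
  apply: ler_wpM2l => //; apply: ler_wiXn2l => //; exact: leq_subr.
apply: (@le_trans _ _ (\sum_j `|(T ^+ n) i j| * delta ^+ (d - j))).
  rewrite (bigD1 j) //= lerDl; apply: sumr_ge0 => k _.
  by rewrite mulr_ge0 // exprn_ge0.
apply: le_trans (trig_weighted n i) _.
rewrite -[X in _ <= X]mulr1; apply: ler_wpM2l; first by apply: exprn_ge0 rho_ge0.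
exact: exprn_ile1.
Qed.

End Trig.

Section Sandwich.
Variable m : nat.

Lemma row_le_total (B : 'M[algC]_m) i : \sum_j `|B i j| <= \sum_k \sum_l `|B k l|.
Proof.
rewrite [X in _ <= X](bigD1 i) //= lerDl; apply: sumr_ge0 => k _.
by apply: sumr_ge0.
Qed.

Lemma col_le_total (B : 'M[algC]_m) j : \sum_i `|B i j| <= \sum_k \sum_l `|B k l|.
Proof.
rewrite [X in _ <= X]exchange_big /= [X in _ <= X](bigD1 j) //= lerDl.
by apply: sumr_ge0 => k _; apply: sumr_ge0.
Qed.

Lemma sandwich (A B C : 'M[algC]_m) c : 0 <= c -> (forall k l, `|B k l| <= c) ->
  forall i j, `|(A *m B *m C) i j| <=
     c * (\sum_k \sum_l `|A k l|) * (\sum_k \sum_l `|C k l|).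
Proof.
move=> c0 Bc i j.
have SA0 : 0 <= \sum_k \sum_l `|A k l| by apply: sumr_ge0 => k _; apply: sumr_ge0.
have AB l : `|(A *m B) i l| <= c * \sum_k `|A i k|.
  rewrite mxE; apply: le_trans (ler_norm_sum _ _ _) _.
  rewrite mulr_sumr; apply: ler_sum => k _; rewrite normrM mulrC.
  by apply: ler_wpM2r.
rewrite mxE; apply: le_trans (ler_norm_sum _ _ _) _.
apply: (@le_trans _ _ (\sum_l (c * \sum_k `|A i k|) * `|C l j|)).
  by apply: ler_sum => l _; rewrite normrM; apply: ler_wpM2r.
rewrite -mulr_sumr; apply: ler_pM.
- by rewrite mulr_ge0 // sumr_ge0.
- by apply: sumr_ge0.
- by apply: ler_wpM2l => //; apply: row_le_total.
- exact: col_le_total.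
Qed.

End Sandwich.

Section Spectral.
Variables (p D : nat).
Variable A : 'I_p -> 'M[algC]_D.
Variable Lam : 'M[algC]_D.
Variable lam2 : algC.
Hypothesis Hinj : injective_canonical A Lam.
Hypothesis Hl2 : is_lambda2 A lam2.

Definition EE := transfer A.
Definition QQ := vecm (1%:M : 'M[algC]_D) *m adjm (vecm Lam).
Definition MM := EE - QQ.

Lemma ch1 : channel A 1%:M = 1%:M.
Proof. by case: Hinj => _ _ [] . Qed.

Lemma chL : channel_adj A Lam = Lam.
Proof. by case: Hinj => _ _ _ []. Qed.

Lemma chU Y : channel_adj A Y = Y -> exists c, Y = c *: Lam.
Proof. by case: Hinj => _ _ _ [] _ H _; apply: H. Qed.

Lemma trL : \tr Lam = 1.
Proof. by case: Hinj => _ _ _ _ [] . Qed.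

Lemma Ldiag : is_diag_mx Lam.
Proof. by case: Hinj => _ _ _ _ []. Qed.

Lemma Lpos i : 0 < Lam i i.
Proof. by case: Hinj => _ _ _ _ [] _ H _; apply: H. Qed.

Lemma lam2_ge0 : 0 <= lam2.
Proof. by case: Hl2 => -[mu _ [_ <-]] _. Qed.

Lemma lam2_lt1 : lam2 < 1.
Proof.
case: Hl2 => -[mu Emu [mu1 <-]] _.
case: Hinj => -[_ Hle] [Hper _] _ _ _.
rewrite lt_def Hle // andbT; apply/eqP => H.
by move: mu1; rewrite (Hper mu Emu (esym H)) eqxx.
Qed.

Lemma dd_gt0 : (0 < D * D)%N.
Proof.
case: Hl2 => -[mu /eigenvalueP [v _ vn0] _] _.
rewrite lt0n; apply: (contra_neq _ vn0) => dd0.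
by apply/matrixP => i [k hk]; exfalso; rewrite dd0 in hk.
Qed.

Lemma LvecI : adjm (vecm Lam) *m vecm 1%:M = 1%:M.
Proof.
rewrite adjm_mul_braket braket_vec; congr _%:M.
transitivity (\sum_a (Lam a a)^*); last by rewrite -rmorph_sum -[\sum_a Lam a a]/(\tr Lam) trL rmorph1.
apply: eq_bigr => a _; rewrite (bigD1 a) //= mxE eqxx mulr1 big1 ?addr0 //.
by move=> b /negbTE; rewrite mxE eq_sym => ->; rewrite mulr0.
Qed.

Lemma EQ : EE *m QQ = QQ.
Proof. by rewrite /QQ mulmxA /EE transfer_vec ch1. Qed.

Lemma QE : QQ *m EE = QQ.
Proof. by rewrite /QQ -mulmxA /EE row_transfer chL. Qed.

Lemma QQ2 : QQ *m QQ = QQ.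
Proof. by rewrite /QQ mulmxA -[_ *m adjm _ *m _]mulmxA LvecI mulmx1. Qed.

Lemma MQ : MM *m QQ = 0.
Proof. by rewrite /MM mulmxBl EQ QQ2 subrr. Qed.

Lemma QM : QQ *m MM = 0.
Proof. by rewrite /MM mulmxBr QE QQ2 subrr. Qed.

Lemma Epow n : EE ^+ n.+1 = QQ + MM ^+ n.+1.
Proof.
elim: n => [|n IH]; first by rewrite !expr1 /MM addrC subrK.
have EQr : EE * QQ = QQ by rewrite -mulmxE EQ.
have QMr : QQ * MM = 0 by rewrite -mulmxE QM.
have EMQ : EE = MM + QQ by rewrite /MM subrK.
rewrite exprS IH mulrDr EQr; congr (_ + _).
by rewrite [in LHS]EMQ mulrDl [X in QQ * X]exprS mulrA QMr mul0r addr0 -exprS.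
Qed.

Definition unrow (v : 'rV[algC]_(D * D)) : 'M[algC]_D :=
  \matrix_(i, j) (v 0 (mxvec_index j i))^*.

Lemma unrowK v : adjm (vecm (unrow v)) = v.
Proof.
apply/matrixP => i k; rewrite (ord1 i); case/mxvec_indexP: k => a b.
by rewrite /adjm /conjm !mxE idx2_mxvec /= conjCK.
Qed.

Lemma adjvec_inj (Y1 Y2 : 'M[algC]_D) : adjm (vecm Y1) = adjm (vecm Y2) -> Y1 = Y2.
Proof.
move=> /(congr1 (@adjm _ _)); rewrite !adjmK => H.
apply/matrixP => a b; by rewrite -!vecmE H.
Qed.

Lemma eigM a : eigenvalue MM a -> `|a| <= lam2.
Proof.
move=> /eigenvalueP [v vM vn0].
have [->|a0] := eqVneq a 0; first by rewrite normr0 lam2_ge0.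
have vQ : v *m QQ = 0.
  have := congr1 (mulmx^~ QQ) vM; rewrite -mulmxA MQ mulmx0 -scalemxAl.
  by move/esym/eqP; rewrite scaler_eq0 (negbTE a0) /= => /eqP.
have vE : v *m EE = a *: v.
  have EMQ : EE = MM + QQ by rewrite /MM subrK.
  by rewrite EMQ mulmxDr vM vQ addr0.
have [a1|an1] := eqVneq a 1.
  exfalso; move: vn0; rewrite -(unrowK v).
  set Y := unrow v.
  have : channel_adj A Y = Y.
    by apply: adjvec_inj; rewrite -row_transfer unrowK -/EE vE a1 scale1r.
  move=> /chU [c Yc]; apply/negP; rewrite negbK.
  move: vQ; rewrite -(unrowK v) -/Y Yc vecmZ adjmZ /QQ mulmxA -scalemxAl.
  by rewrite LvecI scalemx1 mul_scalar_mx => ->.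
case: Hl2 => _ H.
have Ea : eigenvalue EE a by apply/eigenvalueP; exists v.
exact: (H a Ea an1).
Qed.

End Spectral.

Section Power.
Variables (p D : nat).
Variable A : 'I_p -> 'M[algC]_D.
Variable Lam : 'M[algC]_D.
Variable lam2 : algC.
Hypothesis Hinj : injective_canonical A Lam.
Hypothesis Hl2 : is_lambda2 A lam2.

Lemma conj_inv_mul m (P X Y : 'M[algC]_m) : P \in unitmx ->
  (invmx P *m X *m P) *m (invmx P *m Y *m P) = invmx P *m (X *m Y) *m P.
Proof. by move=> Pu; rewrite !mulmxA mulmxK. Qed.

Lemma Mpow_bound : exists K0 N1, 0 <= K0 /\ forall n, (N1 <= n)%N ->
  forall i j, `|(MM A Lam ^+ n) i j| <= K0 * sqrtC lam2 ^+ n.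
Proof.
set M := MM A Lam.
have L0 : 0 <= lam2 := lam2_ge0 Hl2.
have L1 : lam2 < 1 := lam2_lt1 Hinj Hl2.
have [P Pu Ptrig] := Schur M (dd_gt0 Hl2).
have Pinv : P \in unitmx := unitarymx_unit Pu.
set T := P *m M *m invmx P.
have Ttrig : is_trig_mx T by move: Ptrig; rewrite /similar_to /conjmx pinvmxE.
have MT : M = invmx P *m T *m P.
  by rewrite /T !mulmxA mulVmx // mul1mx mulmxKV.
have Tdiag i : `|T i i| <= lam2.
  apply: (eigM Hinj Hl2).
  have : eigenvalue T (T i i).
    rewrite eigenvalue_root_char char_poly_trig // /root horner_prod.
    by rewrite (bigD1 i) //= hornerXsubC subrr mul0r.
  move/eigenvalueP => [u uT un0]; apply/eigenvalueP; exists (u *m P).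
    have PM : P *m M = T *m P by rewrite /T mulmxKV.
    by rewrite -/M -mulmxA PM mulmxA uT -scalemxAl.
  apply: contra un0 => /eqP uP0; apply/eqP.
  by rewrite -(mulmxK Pinv u) uP0 mul0mx.
have Mpow n : M ^+ n = invmx P *m T ^+ n *m P.
  elim: n => [|n IH]; first by rewrite !expr0 -[1]/(1%:M) mulmx1 mulVmx.
  by rewrite !exprSr -!mulmxE IH [M in LHS]MT conj_inv_mul.
have [l0|l0] := eqVneq lam2 0.
  have T0 i : T i i = 0 by apply/eqP; rewrite -normr_le0 -l0.
  exists 0, (D * D)%N; split => // n le_n i j.
  rewrite Mpow -(subnK le_n) exprD -mulmxE (trig_nil Ttrig T0) !mulmx0 !mul0mx.
  by rewrite mxE normr0 mul0r.
have l2pos : 0 < lam2 by rewrite lt_def l0 L0.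
set s := sqrtC lam2.
have s0 : 0 < s by rewrite sqrtC_gt0.
have s2 : s ^+ 2 = lam2 by rewrite sqrtCK.
have s1 : s < 1.
  by rewrite -(@expr_lt1 _ 2) // ?ltW // s2 L1.
have ls : lam2 < s by rewrite -s2 expr2 -[X in _ < X]mulr1 ltr_pM2l.
set B := Bsum T.
have B0 : 0 <= B := Bsum_ge0 T.
have B1 : 0 < B + 1 by rewrite ltr_wpDl // ltr01.
set delta := (s - lam2) / (B + 1).
have d0 : 0 < delta by rewrite divr_gt0 // subr_gt0.
have d1 : delta <= 1.
  rewrite ler_pdivrMr // mul1r; apply: le_trans (_ : s <= B + 1).
    by rewrite gerBl L0.
  by apply: le_trans (ltW s1) _; rewrite lerDr.
have rs : rho T lam2 delta <= s.
  have dB : delta * B <= s - lam2.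
    rewrite /delta mulrAC ler_pdivrMr //; apply: ler_wpM2l.
      by rewrite subr_ge0 ltW.
    by rewrite lerDl ler01.
  rewrite /rho -/B; apply: le_trans (lerD (lexx lam2) dB) _.
  by rewrite addrC subrK.
set SP := \sum_k \sum_l `|P k l|.
set SPi := \sum_k \sum_l `|invmx P k l|.
exists (SPi * SP / delta ^+ (D * D)), 0%N; split.
  have SP0 : 0 <= SP by apply: sumr_ge0 => k _; apply: sumr_ge0.
  have SPi0 : 0 <= SPi by apply: sumr_ge0 => k _; apply: sumr_ge0.
  by rewrite divr_ge0 ?mulr_ge0 ?exprn_ge0 // ltW.
move=> n _ i j; rewrite Mpow.
have c0 : 0 <= s ^+ n / delta ^+ (D * D) by rewrite divr_ge0 // exprn_ge0 // ltW.
apply: le_trans (sandwich (invmx P) P c0 _ i j) _.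
  move=> k l; apply: le_trans (trig_bound Ttrig L0 Tdiag d0 d1 n k l) _.
  apply: ler_wpM2r; first by rewrite invr_ge0 exprn_ge0 // ltW.
  by apply: ler_expn => //; rewrite /rho addr_ge0 // mulr_ge0 // ltW.
by rewrite -/SP -/SPi le_eqVlt; apply/orP; left; apply/eqP; ring.
Qed.

End Power.

Lemma bernoulli_alg (h : algC) n : 0 <= h -> 1 + n%:R * h <= (1 + h) ^+ n.
Proof.
move=> h0; elim: n => [|n IH]; first by rewrite mul0r addr0 expr0.
rewrite exprS; apply: le_trans (_ : (1 + h) * (1 + n%:R * h) <= _).
  rewrite -subr_ge0.
  have -> : (1 + h) * (1 + n%:R * h) - (1 + n.+1%:R * h) = n%:R * h * h.
    by rewrite -natr1; ring.
  by rewrite !mulr_ge0.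
apply: ler_wpM2l => //; by rewrite addr_ge0.
Qed.

Lemma small_pow (s eps : algC) : 0 <= s -> s < 1 -> 0 < eps ->
  exists N, forall n, (N <= n)%N -> s ^+ n <= eps.
Proof.
move=> s0 s1 e0.
have [->|sn0] := eqVneq s 0.
  by exists 1%N => -[|n] // _; rewrite expr0n /= ltW.
have sp : 0 < s by rewrite lt_def sn0 s0.
set h := s^-1 - 1.
have hp : 0 < h by rewrite subr_gt0 invf_gt1.
have x0 : 0 <= (eps * h)^-1 by rewrite invr_ge0 ltW // mulr_gt0.
exists (Num.Def.archi_bound (eps * h)^-1) => n le_n.
have nbig : (eps * h)^-1 < n%:R.
  apply: lt_le_trans (archi_boundP x0) _; by rewrite ler_nat.
have sn : s ^+ n = ((1 + h) ^+ n)^-1 by rewrite /h addrC subrK exprVn invrK.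
rewrite sn -div1r ler_pdivrMr; last by apply: exprn_gt0; apply: addr_gt0.
apply: le_trans (_ : eps * (1 + n%:R * h) <= _); last first.
  by apply: ler_wpM2l; [apply: ltW | apply: bernoulli_alg; apply: ltW].
have : eps * h * (eps * h)^-1 < eps * h * n%:R by rewrite ltr_pM2l ?mulr_gt0.
rewrite mulfV ?gt_eqF ?mulr_gt0 // => /ltW H; apply: le_trans H _.
rewrite -subr_ge0 (_ : eps * (1 + n%:R * h) - eps * h * n%:R = eps).
  exact: ltW.
ring.
Qed.

Section Frob.
Variable D : nat.
Implicit Types X Y : 'M[algC]_D.

Definition S2 X := \sum_i \sum_j `|X i j| ^+ 2.

Lemma S2_ge0 X : 0 <= S2 X.
Proof. by apply: sumr_ge0 => i _; apply: sumr_ge0 => j _; apply: exprn_ge0. Qed.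

Lemma frob_ge0 X : 0 <= frob X.
Proof. by rewrite /frob sqrtC_ge0 S2_ge0. Qed.

Lemma entry_le_frob X a b : `|X a b| <= frob X.
Proof.
have h1 : `|X a b| ^+ 2 <= S2 X.
  rewrite /S2 (bigD1 a) //= (bigD1 b) //= -addrA lerDl addr_ge0 //.
    by apply: sumr_ge0 => j _; apply: exprn_ge0.
  by apply: sumr_ge0 => i _; apply: sumr_ge0 => j _; apply: exprn_ge0.
rewrite -(@ler_pXn2r _ 2) // ?nnegrE ?frob_ge0 //.
by rewrite /frob sqrtCK.
Qed.

Lemma kron_entry X Y k l : `|kron (conjm X) Y k l| <= frob X * frob Y.
Proof.
case/mxvec_indexP: k => a b; case/mxvec_indexP: l => c d.
rewrite kronE mxE normrM norm_conjC.
by apply: ler_pM => //; apply: entry_le_frob.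
Qed.

Lemma tr_bound m (Mx K : 'M[algC]_m) c e : 0 <= c -> 0 <= e ->
  (forall i j, `|Mx i j| <= c) -> (forall i j, `|K i j| <= e) ->
  `|\tr (Mx *m K)| <= (c * e) *+ (m * m).
Proof.
move=> c0 e0 Mc Ke; rewrite /mxtrace; apply: le_trans (ler_norm_sum _ _ _) _.
apply: le_trans (_ : \sum_(i < m) (c * e) *+ m <= _).
  apply: ler_sum => i _; rewrite mxE; apply: le_trans (ler_norm_sum _ _ _) _.
  rewrite -[m in _ *+ m]card_ord -sumr_const; apply: ler_sum => j _.
  by rewrite normrM; apply: ler_pM.
by rewrite sumr_const card_ord mulrnA.
Qed.

End Frob.

Lemma LXX (p D : nat) (A : 'I_p -> 'M[algC]_D) (Lam : 'M[algC]_D) :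
  injective_canonical A Lam -> forall X : 'M[algC]_D,
  braket (vecm Lam) (kron (conjm X) X *m vecm 1%:M) =
  \sum_a Lam a a * \sum_j `|X a j| ^+ 2.
Proof.
move=> Hinj X; rewrite kron_vec braket_vec; apply: eq_bigr => a _.
rewrite (bigD1 a) //= big1 ?addr0 => [|b /negbTE ba]; last first.
  rewrite (is_diag_mxP (Ldiag Hinj) b a); last exact: (negbT ba).
  by rewrite (_ : (0 : algC)^* = 0) ?conjC0 ?mul0r.
rewrite geC0_conj ?ltW ?(Lpos Hinj) //; congr (_ * _).
rewrite mulmx1 mxE; apply: eq_bigr => j _; by rewrite mxE mxE normCK.
Qed.

Unset Implicit Arguments.

Theorem lemma7 (p D : nat) (A : 'I_p -> 'M[algC]_D) (Lam : 'M[algC]_D) (lam2 : algC) :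
  injective_canonical A Lam ->
  is_lambda2 A lam2 ->
  exists (C : algC) (N : nat),
    forall (n : nat) (X Y : 'M[algC]_D),
      (N <= n)%N ->
      mps_inner A X X n = 1 -> mps_inner A Y Y n = 1 -> mps_inner A X Y n = 0 ->
      [/\ frob X <= C, frob Y <= C,
          `|braket (vecm Lam) (kron (conjm X) Y *m vecm 1%:M)| <= C * sqrtC lam2 ^+ n
        & `|braket (vecm Lam) (kron (conjm Y) X *m vecm 1%:M)| <= C * sqrtC lam2 ^+ n].
Proof.
move=> Hinj Hl2.
have L0 := lam2_ge0 Hl2; have L1 := lam2_lt1 Hinj Hl2.
have [K0 [N1 [K00 HM]]] := Mpow_bound Hinj Hl2.
set s := sqrtC lam2.
have s0 : 0 <= s by rewrite sqrtC_ge0.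
have s1 : s < 1 by rewrite /s -sqrtC1 ltr_sqrtC ?nnegrE ?ler01.
set W := ((D * D) * (D * D))%N.
have D0 : (0 < D)%N by have := dd_gt0 Hl2; rewrite muln_gt0 => /andP[].
set c0 := Ordinal D0.
set m := (\sum_c (Lam c c)^-1)^-1.
have Sp : 0 < \sum_c (Lam c c)^-1.
  rewrite (bigD1 c0) //=; apply: ltr_wpDr; last by rewrite invr_gt0 (Lpos Hinj).
  by apply: sumr_ge0 => c _; rewrite invr_ge0 ltW // (Lpos Hinj).
have m0 : 0 < m by rewrite invr_gt0.
have mL c : m <= Lam c c.
  rewrite /m -[Lam c c]invrK lef_pV2 ?posrE ?invr_gt0 ?(Lpos Hinj) //.
  rewrite (bigD1 c) //= lerDl; apply: sumr_ge0 => k _.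
  by rewrite invr_ge0 ltW // (Lpos Hinj).
set h := m / 2.
have h0 : 0 < h by rewrite divr_gt0.
have mhh : m = h + h by rewrite /h; field.
have KW1 : 0 < K0 *+ W + 1 by rewrite ltr_wpDl ?mulrn_wge0 // ltr01.
have [N2 HN2] := small_pow s0 s1 (divr_gt0 h0 KW1).
set C1 := sqrtC h^-1.
have C10 : 0 <= C1 by rewrite sqrtC_ge0 invr_ge0 ltW.
set C := C1 + K0 * C1 ^+ 2 *+ W.
exists C, (maxn (maxn N1 N2) 1) => n X Y le_n hXX hYY hXY.
move: le_n; rewrite !geq_max => /andP[/andP[nN1 nN2] n1].
have decomp Z1 Z2 : mps_inner A Z1 Z2 n =
    braket (vecm Lam) (kron (conjm Z1) Z2 *m vecm 1%:M) +
    \tr (MM A Lam ^+ n *m kron (conjm Z1) Z2).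
  rewrite inner_tr; have nS : n = n.-1.+1 by rewrite prednK.
  rewrite [in LHS]nS -[transfer A]/(EE A) (Epow Hinj) -nS mulmxDl mxtraceD.
  congr (_ + _).
  by rewrite /QQ tr_rank1.
have errb Z1 Z2 : `|\tr (MM A Lam ^+ n *m kron (conjm Z1) Z2)| <=
    (K0 * s ^+ n * (frob Z1 * frob Z2)) *+ W.
  rewrite /W; apply: tr_bound.
  - by rewrite mulr_ge0 // exprn_ge0.
  - by rewrite mulr_ge0 // frob_ge0.
  - by move=> i j; apply: HM.
  - by move=> i j; apply: kron_entry.
have sn : K0 * s ^+ n *+ W <= h.
  have -> : K0 * s ^+ n *+ W = (K0 *+ W) * s ^+ n by rewrite mulrnAl.
  apply: (@le_trans _ _ ((K0 *+ W + 1) * s ^+ n)).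
    by apply: ler_wpM2r; [apply: exprn_ge0 | rewrite lerDl ler01].
  rewrite mulrC -ler_pdivlMr //; exact: HN2.
have fb Z : mps_inner A Z Z n = 1 -> frob Z <= C1.
  move=> hZ; have := decomp Z Z; rewrite hZ.
  set L := braket _ _; set err := \tr _ => e1.
  have LmS : m * S2 Z <= L.
    rewrite /L (LXX Hinj) /S2 mulr_sumr; apply: ler_sum => a _.
    apply: ler_wpM2r => //; by apply: sumr_ge0 => j _; apply: exprn_ge0.
  have Lg0 : 0 <= L.
    by apply: (le_trans _ LmS); apply: mulr_ge0; [apply: ltW | apply: S2_ge0].
  have ff : frob Z * frob Z = S2 Z by rewrite -expr2 sqrtCK.
  have Lle : L <= 1 + h * S2 Z.
    have eL : L = 1 - err by rewrite e1 addrK.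
    apply: le_trans (_ : L <= `|L|) _; first by rewrite ger0_norm.
    rewrite {1}eL; apply: le_trans (ler_normB _ _) _; rewrite normr1 lerD2l.
    apply: le_trans (errb Z Z) _; rewrite ff -[(K0 * s ^+ n * _) *+ W]mulrnAl.
    apply: ler_wpM2r => //; exact: S2_ge0.
  have hS : h * S2 Z <= 1.
    have := le_trans LmS Lle; rewrite mhh mulrDl lerD2r //.
  have SZ : S2 Z <= h^-1 by rewrite -div1r ler_pdivlMr // mulrC.
  by rewrite /frob /C1 ler_sqrtC ?nnegrE ?S2_ge0 // invr_ge0 ltW.
have fX := fb X hXX; have fY := fb Y hYY.
have hYX : mps_inner A Y X n = 0 by rewrite (inner_sym A X Y) hXY rmorph0.
have Lb Z1 Z2 : frob Z1 <= C1 -> frob Z2 <= C1 -> mps_inner A Z1 Z2 n = 0 ->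
    `|braket (vecm Lam) (kron (conjm Z1) Z2 *m vecm 1%:M)| <= C * s ^+ n.
  move=> f1 f2 h12; have := decomp Z1 Z2; rewrite h12 => /esym/eqP.
  rewrite addr_eq0 => /eqP ->; rewrite normrN.
  apply: le_trans (errb Z1 Z2) _; rewrite -[(K0 * s ^+ n * _) *+ W]mulrnAl.
  apply: le_trans (_ : (K0 * s ^+ n *+ W) * C1 ^+ 2 <= _).
    apply: ler_wpM2l; first by rewrite mulrn_wge0 // mulr_ge0 // exprn_ge0.
    by rewrite expr2; apply: ler_pM => //; apply: frob_ge0.
  rewrite /C mulrDl -mulrnAl -mulrnAl mulrAC; apply: ler_wpDl.
    by rewrite mulr_ge0 // exprn_ge0.
  by [].
have C1C : C1 <= C by rewrite /C lerDl mulrn_wge0 // mulr_ge0 // exprn_ge0.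
split.
- exact: le_trans fX C1C.
- exact: le_trans fY C1C.
- exact: Lb.
- exact: Lb.
Qed.
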